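(* For every real $t>\frac32$ there exist unique $t_1>1$ and $t_2\in\mathbb R$ such that $$t^2-tt_1+t_1^2-(t_2-1)^2=0,\qquad 2tt_1-t-t_1+1-2t_2=0.$$ For such $t,t_1,t_2$ one has $t_2>t_1$. *)

(* Defs.v *)
From Stdlib Require Export Reals.
Open Scope R_scope.

Definition sys (t t1 t2 : R) : Prop :=
  t ^ 2 - t * t1 + t1 ^ 2 - (t2 - 1) ^ 2 = 0 /\
  2 * t * t1 - t - t1 + 1 - 2 * t2 = 0.

(* Main.v *)
Require Import Defs.
From Stdlib Require Import Reals Lra Psatz.
Open Scope R_scope.

Lemma sys_q t t1 t2 : sys t t1 t2 <->
  (t2 = (2*t*t1 - t - t1 + 1)/2 /\
   (2*t-3)*(2*t+1)*t1^2 - 2*(2*t+1)*(t-1)*t1 - (t-1)*(3*t+1) = 0).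
Proof.
  unfold sys; split.
  - intros [H1 H2].
    assert (E : t2 = (2*t*t1 - t - t1 + 1)/2) by lra.
    split; [exact E|]. subst t2. nra.
  - intros [E H]. subst t2. split; [nra|lra].
Qed.

Theorem lemma4p5 :
  forall t : R, t > 3 / 2 ->
    (exists t1 t2 : R, (t1 > 1 /\ sys t t1 t2) /\
       forall s1 s2 : R, s1 > 1 -> sys t s1 s2 -> s1 = t1 /\ s2 = t2) /\
    (forall t1 t2 : R, t1 > 1 -> sys t t1 t2 -> t2 > t1).
Proof.
  intros t Ht.
  set (a := (2*t-3)*(2*t+1)).
  set (B := 2*(2*t+1)*(t-1)).
  set (C := (t-1)*(3*t+1)).
  assert (Ha : a > 0) by (unfold a; nra).
  assert (HB : B > 0) by (unfold B; nra).
  assert (HC : C > 0) by (unfold C; nra).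
  assert (HCab : C > a - B) by (unfold a, B, C; nra).
  set (D := B^2 + 4*a*C).
  assert (HD : 0 <= D) by (unfold D; nra).
  set (s := sqrt D).
  assert (Hs : s * s = D) by (apply sqrt_sqrt; exact HD).
  assert (Hs0 : 0 <= s) by apply sqrt_pos.
  assert (Hsp : 0 < s) by (apply sqrt_lt_R0; unfold D; nra).
  set (x := (B + s)/(2*a)).
  assert (Hq : a*x^2 - B*x - C = 0).
  { unfold x. field_simplify; [|lra]. unfold D in Hs.
    replace (s^2) with (s*s) by ring. rewrite Hs. field_simplify; lra. }
  assert (Hx1 : x > 1).
  { unfold x. apply Rlt_gt. apply (Rmult_lt_reg_r (2*a)); [lra|].
    replace ((B + s) / (2 * a) * (2 * a)) with (B + s) by (field; lra).
    destruct (Rle_dec (2*a - B) 0); [lra|].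
    assert (s * s > (2*a - B)*(2*a-B)) by (rewrite Hs; unfold D; nra).
    nra. }
  assert (Hgt : forall t1 t2, t1 > 1 -> sys t t1 t2 -> t2 > t1).
  { intros t1 t2 H1 Hs'. apply sys_q in Hs'. destruct Hs' as [E H].
    subst t2. set (y := (2*t-3)*t1).
    assert (Hy : y > 0) by (unfold y; nra).
    assert (Hyy : (2*t+1)*y*(y - 2*(t-1)) = (2*t-3)*C).
    { unfold y, C. nra. }
    assert (y - 2*(t-1) > 0).
    { destruct (Rle_dec (y - 2*(t-1)) 0); [|lra].
      assert ((2*t+1)*y*(y - 2*(t-1)) <= 0).
      { assert (0 <= (2*t+1)*y) by nra. nra. }
      nra. }
    unfold y in *. nra. }
  split; [|exact Hgt].
  exists x, ((2*t*x - t - x + 1)/2).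
  split.
  - split; [exact Hx1|]. apply sys_q. split; [reflexivity|].
    fold a B C. exact Hq.
  - intros s1 s2 H1 Hss. apply sys_q in Hss. destruct Hss as [E H].
    fold a B C in H.
    assert (s1 = x).
    { destruct (Req_dec s1 x) as [e|ne]; [exact e|].
      assert (Hsum : a*(s1+x) - B = 0).
      { apply (Rmult_eq_reg_l (s1 - x)); [|lra]. nra. }
      assert (Hc : C = - (a*s1*x)).
      { replace B with (a*(s1+x)) in H by lra. nra. }
      assert (0 < a*s1*x).
      { apply Rmult_lt_0_compat; [apply Rmult_lt_0_compat|]; lra. }
      lra. }
    subst s1. split; [reflexivity|exact E].
Qed.
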